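(* Let $m$ be a tour with core $K$. If $\theta_1\in\mathbb{S}^1$ and $z\in\partial K\cap D(\theta_1)$, then $z=m(\theta_1)$.
   Context: Write $\mathbb{S}^1=\mathbb{R}/2\pi\mathbb{Z}$, $u(\theta)=(\cos\theta,\sin\theta)$ and $u^\perp(\theta)=(-\sin\theta,\cos\theta)$. A ruled function $R:\mathbb{S}^1\to\mathbb{R}$ is one having a left limit $R_l(\theta)$ and a right limit $R_r(\theta)$ at every point. A tour is a continuous map $m:\mathbb{S}^1\to\mathbb{R}^2$ such that: - $m$ has left and right derivatives at every point; - there is a ruled function $R$ with $m'_l(\theta)=R_l(\theta)u(\theta)$ and $m'_r(\theta)=R_r(\theta)u(\theta)$. For each $\theta$, $D(\theta)=m(\theta)+\mathbb{R}u(\theta)$ is the line oriented by $u(\theta)$, and $D^+(\theta)=\{x:\langle x-m(\theta),u^\perp(\theta)\rangle\ge0\}$ is its closed left half-plane. The core of the tour is $K=\bigcap_{\theta}D^+(\theta)$. *)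

(* Defs.v *)
From Stdlib Require Import Reals.
From Coquelicot Require Import Coquelicot.
Open Scope R_scope.

(* Points of the plane R^2 are pairs of reals. Functions on S^1 = R/2piZ
   are represented as 2pi-periodic functions on R. *)
Definition pt := (R * R)%type.

Definition periodic2pi {A : Type} (f : R -> A) : Prop :=
  forall t, f (t + 2 * PI) = f t.

Definition u (t : R) : pt := (cos t, sin t).
Definition uperp (t : R) : pt := (- sin t, cos t).

Definition inner (x y : pt) : R := fst x * fst y + snd x * snd y.

Definition left_lim (f : R -> R) (t l : R) : Prop :=
  filterlim f (at_left t) (locally l).
Definition right_lim (f : R -> R) (t l : R) : Prop :=
  filterlim f (at_right t) (locally l).

Definition ruled (Rf : R -> R) : Prop :=
  periodic2pi Rf /\
  forall t, (exists l, left_lim Rf t l) /\ (exists r, right_lim Rf t r).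

Definition left_deriv (m : R -> pt) (t : R) (d : pt) : Prop :=
  filterlim (fun h => (fst (m (t + h)) - fst (m t)) / h) (at_left 0) (locally (fst d)) /\
  filterlim (fun h => (snd (m (t + h)) - snd (m t)) / h) (at_left 0) (locally (snd d)).
Definition right_deriv (m : R -> pt) (t : R) (d : pt) : Prop :=
  filterlim (fun h => (fst (m (t + h)) - fst (m t)) / h) (at_right 0) (locally (fst d)) /\
  filterlim (fun h => (snd (m (t + h)) - snd (m t)) / h) (at_right 0) (locally (snd d)).

Definition scal2 (a : R) (x : pt) : pt := (a * fst x, a * snd x).
Definition add2 (x y : pt) : pt := (fst x + fst y, snd x + snd y).

Definition tour (m : R -> pt) : Prop :=
  periodic2pi m /\
  (forall t, continuous (fun s => fst (m s)) t /\ continuous (fun s => snd (m s)) t) /\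
  exists Rf : R -> R, ruled Rf /\
    forall t, exists l r : R,
      left_lim Rf t l /\ right_lim Rf t r /\
      left_deriv m t (scal2 l (u t)) /\ right_deriv m t (scal2 r (u t)).

Definition Dline (m : R -> pt) (t : R) (z : pt) : Prop :=
  exists s : R, z = add2 (m t) (scal2 s (u t)).

Definition Dplus (m : R -> pt) (t : R) (x : pt) : Prop :=
  inner (add2 x (scal2 (-1) (m t))) (uperp t) >= 0.

Definition core (m : R -> pt) (x : pt) : Prop := forall t, Dplus m t x.

Definition dist2 (x y : pt) : R :=
  sqrt ((fst x - fst y) ^ 2 + (snd x - snd y) ^ 2).

Definition boundary (K : pt -> Prop) (z : pt) : Prop :=
  forall eps, eps > 0 ->
    (exists y, K y /\ dist2 z y < eps) /\ (exists y, ~ K y /\ dist2 z y < eps).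

(* Main.v *)
Require Import Defs.
From Stdlib Require Import Reals Lra.
From Coquelicot Require Import Coquelicot.
Open Scope R_scope.

Lemma cs_bound (a b t : R) : a * (- sin t) + b * cos t <= sqrt (a ^ 2 + b ^ 2).
Proof.
  assert (H1 : sin t ^ 2 + cos t ^ 2 = 1).
  { pose proof (sin2_cos2 t). unfold Rsqr in H. lra. }
  apply Rle_trans with (Rabs (a * (- sin t) + b * cos t)); [apply Rle_abs|].
  rewrite <- sqrt_Rsqr_abs. apply sqrt_le_1_alt. unfold Rsqr.
  assert (E : a ^ 2 + b ^ 2 - (a * - sin t + b * cos t) * (a * - sin t + b * cos t)
              = (a * cos t + b * sin t) ^ 2).
  { replace (a^2 + b^2) with ((a^2+b^2)*(sin t ^ 2 + cos t ^ 2)) by (rewrite H1; ring). ring. }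
  pose proof (pow2_ge_0 (a * cos t + b * sin t)). lra.
Qed.

Lemma in_core (m : R -> pt) (z : pt) : boundary (core m) z -> core m z.
Proof.
  intros Hb t. unfold Dplus. destruct (Rge_dec (inner (add2 z (scal2 (-1) (m t))) (uperp t)) 0)
    as [H|H]; [exact H|]. exfalso.
  set (v := - inner (add2 z (scal2 (-1) (m t))) (uperp t)).
  assert (Hv : v > 0) by (unfold v; lra).
  destruct (Hb v Hv) as [[y [Hy Hd]] _].
  specialize (Hy t).
  pose proof (cs_bound (fst y - fst z) (snd y - snd z) t) as C.
  replace ((fst y - fst z) ^ 2 + (snd y - snd z) ^ 2) with
    ((fst z - fst y) ^ 2 + (snd z - snd y) ^ 2) in C by ring.
  unfold Dplus, inner, add2, scal2, uperp, dist2 in *. simpl in *.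
  unfold v in Hd. apply Rnot_ge_lt in H. lra.
Qed.

Lemma lim_mult {T} (F : (T -> Prop) -> Prop) {FF : Filter F} (f g : T -> R) a b :
  filterlim f F (locally a) -> filterlim g F (locally b) ->
  filterlim (fun x => f x * g x) F (locally (a * b)).
Proof. intros Hf Hg. exact (filterlim_comp_2 f g Rmult Hf Hg (filterlim_mult a b)). Qed.

Lemma lim_plus {T} (F : (T -> Prop) -> Prop) {FF : Filter F} (f g : T -> R) a b :
  filterlim f F (locally a) -> filterlim g F (locally b) ->
  filterlim (fun x => f x + g x) F (locally (a + b)).
Proof. intros Hf Hg. exact (filterlim_comp_2 f g Rplus Hf Hg (filterlim_plus a b)). Qed.

Lemma lim_opp {T} (F : (T -> Prop) -> Prop) {FF : Filter F} (f : T -> R) a :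
  filterlim f F (locally a) -> filterlim (fun x => - f x) F (locally (- a)).
Proof. intros Hf. eapply filterlim_comp; [exact Hf| exact (filterlim_opp a)]. Qed.

Lemma le_right : filter_le (at_right 0) (locally' 0).
Proof. intros P [d H]. exists d. intros y Hy Hy2. apply H; auto. lra. Qed.
Lemma le_left : filter_le (at_left 0) (locally' 0).
Proof. intros P [d H]. exists d. intros y Hy Hy2. apply H; auto. lra. Qed.
Lemma le_right' : filter_le (at_right 0) (locally 0).
Proof. intros P [d H]. exists d. intros y Hy Hy2. apply H; auto. Qed.
Lemma le_left' : filter_le (at_left 0) (locally 0).
Proof. intros P [d H]. exists d. intros y Hy Hy2. apply H; auto. Qed.

Lemma sinc_lim : filterlim (fun h => sin h / h) (locally' 0) (locally 1).
Proof.
  apply filterlim_locally. intros eps.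
  destruct (derivable_pt_lim_sin 0 eps (cond_pos eps)) as [d Hd].
  exists d. intros y Hy Hy0. change (Rabs (y - 0) < d) in Hy. rewrite Rminus_0_r in Hy.
  specialize (Hd y Hy0 Hy). change (Rabs (sin y / y - 1) < eps).
  rewrite Rplus_0_l, sin_0, cos_0, Rminus_0_r in Hd. exact Hd.
Qed.

Lemma trig_shift (a : R) (F : (R -> Prop) -> Prop) {FF : Filter F} :
  filter_le F (locally 0) ->
  filterlim (fun h => cos (a + h)) F (locally (cos a)) /\
  filterlim (fun h => sin (a + h)) F (locally (sin a)).
Proof.
  intros HF. split; apply (filterlim_filter_le_1 _ HF).
  - assert (C : continuous (fun h => cos (a + h)) 0) by (apply (@ex_derive_continuous R_AbsRing R_NormedModule); auto_derive; auto).
    unfold continuous in C; simpl in C; rewrite Rplus_0_r in C. exact C.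
  - assert (C : continuous (fun h => sin (a + h)) 0) by (apply (@ex_derive_continuous R_AbsRing R_NormedModule); auto_derive; auto).
    unfold continuous in C; simpl in C; rewrite Rplus_0_r in C. exact C.
Qed.

Definition gfun (m : R -> pt) (th s h : R) : R :=
  - ((fst (m (th + h)) - fst (m th)) / h * - sin (th + h) +
     (snd (m (th + h)) - snd (m th)) / h * cos (th + h)) + - (s * (sin h / h)).

Lemma gfun_lim (F : (R -> Prop) -> Prop) {FF : Filter F} (m : R -> pt) (th s r : R) :
  filter_le F (locally' 0) -> filter_le F (locally 0) ->
  filterlim (fun h => (fst (m (th + h)) - fst (m th)) / h) F (locally (r * cos th)) ->
  filterlim (fun h => (snd (m (th + h)) - snd (m th)) / h) F (locally (r * sin th)) ->
  filterlim (gfun m th s) F (locally (- s)).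
Proof.
  intros H1 H2 D1 D2. destruct (trig_shift th F H2) as [Cc Cs].
  assert (S : filterlim (fun h => sin h / h) F (locally 1)) by
    (apply (filterlim_filter_le_1 _ H1); exact sinc_lim).
  pose proof (lim_plus F _ _ _ _
    (lim_opp F _ _ (lim_plus F _ _ _ _ (lim_mult F _ _ _ _ D1 (lim_opp F _ _ Cs))
                                   (lim_mult F _ _ _ _ D2 Cc)))
    (lim_opp F _ _ (lim_mult F _ _ _ _ (filterlim_const s) S))) as L.
  replace (- s) with (- (r * cos th * - sin th + r * sin th * cos th) + - (s * 1)) by ring.
  exact L.
Qed.

Lemma gfun_id (m : R -> pt) (th s h : R) : h <> 0 ->
  h * gfun m th s h =
  inner (add2 (add2 (m th) (scal2 s (u th))) (scal2 (-1) (m (th + h)))) (uperp (th + h)).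
Proof.
  intros Hh. unfold gfun, inner, add2, scal2, u, uperp. simpl.
  replace (sin h) with (sin ((th + h) - th)) by (f_equal; ring).
  rewrite sin_minus. field. exact Hh.
Qed.

Theorem mainTheorem3 (m : R -> pt) (theta1 : R) (z : pt) :
  tour m -> boundary (core m) z -> Dline m theta1 z -> z = m theta1.
Proof.
  intros [_ [_ [Rf [_ HR]]]] Hb [s Hz].
  pose proof (in_core m z Hb) as Hc.
  destruct (HR theta1) as [l [r [_ [_ [[L1 L2] [R1 R2]]]]]].
  simpl in L1, L2, R1, R2.
  assert (Lr := gfun_lim (at_right 0) m theta1 s r le_right le_right' R1 R2).
  assert (Ll := gfun_lim (at_left 0) m theta1 s l le_left le_left' L1 L2).
  assert (Pos : at_right 0 (fun h => 0 <= gfun m theta1 s h)).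
  { exists (mkposreal 1 Rlt_0_1). intros h _ Hh.
    pose proof (gfun_id m theta1 s h ltac:(lra)) as E.
    pose proof (Hc (theta1 + h)) as D. unfold Dplus in D. rewrite <- Hz in E; rewrite <- E in D.
    destruct (Rle_or_lt 0 (gfun m theta1 s h)) as [G|G]; auto. nra. }
  assert (Neg : at_left 0 (fun h => gfun m theta1 s h <= 0)).
  { exists (mkposreal 1 Rlt_0_1). intros h _ Hh.
    pose proof (gfun_id m theta1 s h ltac:(lra)) as E.
    pose proof (Hc (theta1 + h)) as D. unfold Dplus in D. rewrite <- Hz in E; rewrite <- E in D.
    destruct (Rle_or_lt (gfun m theta1 s h) 0) as [G|G]; auto. nra. }
  pose proof (filterlim_le (F := at_right 0) (fun _ => 0) (gfun m theta1 s) 0 (- s) Pos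
                 (filterlim_const 0) Lr) as A.
  pose proof (filterlim_le (F := at_left 0) (gfun m theta1 s) (fun _ => 0) (- s) 0 Neg
                 Ll (filterlim_const 0)) as B.
  simpl in A, B.
  assert (s = 0) by lra. subst s. rewrite Hz. unfold add2, scal2. simpl.
  destruct (m theta1); simpl; f_equal; ring.
Qed.
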